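(* Let $X := (0,\infty)$ and let $g : X \to X$ be continuous and strictly increasing with $g(x) < x$ for all $x>0$. Then the following statements are equivalent. (i) The functions $g$ and $\mathrm{id}-g$ (i.e. $x \mapsto x - g(x)$) admit a common Abel function. (ii) The functions $g$ and $\mathrm{id}-g$ commute, i.e. $g(x - g(x)) = g(x) - g(g(x))$ for all $x>0$. (iii) For all $x>0$, $g(x) = g(x - g(x)) + g(g(x))$.
   Context: An Abel function of a map $\phi : X \to X$ is a homeomorphism $\alpha : X \to \mathbb{R}$ for which there is a constant $c$ with $\alpha(\phi(x)) = \alpha(x) + c$ for all $x > 0$. A common Abel function of $g$ and $\mathrm{id}-g$ is a single such $\alpha$ that is an Abel function of both (with possibly different constants). *)

(* Defs.v *)
(* concrete reals R. X := (0, +oo) is represented by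
   functions R -> R considered only on positive arguments. *)
From Stdlib Require Import Reals.
Open Scope R_scope.

Definition homeo_X_R (alpha : R -> R) : Prop :=
  (forall x, 0 < x -> continuity_pt alpha x) /\
  exists beta : R -> R,
    (forall y, 0 < beta y) /\
    (forall y, alpha (beta y) = y) /\
    (forall x, 0 < x -> beta (alpha x) = x) /\
    (forall y, continuity_pt beta y).

Definition Abel_function (phi alpha : R -> R) : Prop :=
  homeo_X_R alpha /\
  exists c : R, forall x, 0 < x -> alpha (phi x) = alpha x + c.

Definition common_Abel_function (phi psi alpha : R -> R) : Prop :=
  Abel_function phi alpha /\ Abel_function psi alpha.

(* Main.v *)
Require Import Defs.
From Stdlib Require Import Reals.
Open Scope R_scope.
From Stdlib Require Import Lra Lia List Classical.
Import ListNotations.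

Fixpoint it (f : R -> R) (n : nat) (x : R) : R :=
  match n with O => x | S n => f (it f n x) end.

Record SP (g h : R -> R) : Prop := {
  sp_gpos : forall x, 0 < x -> 0 < g x;
  sp_hpos : forall x, 0 < x -> 0 < h x;
  sp_sum : forall x, 0 < x -> g x + h x = x;
  sp_comm : forall x, 0 < x -> g (h x) = h (g x);
  sp_ginc : forall x y, 0 < x -> x < y -> g x < g y;
  sp_hinc : forall x y, 0 < x -> x < y -> h x < h y;
  sp_gcont : forall x, 0 < x -> continuity_pt g x }.

Lemma SP_sym g h : SP g h -> (forall x, 0 < x -> continuity_pt h x) -> SP h g.
Proof.
  intros [a b c d e f k] hc; constructor; auto.
  - intros x hx; pose proof (c x hx); lra.
  - intros x hx; symmetry; auto.
Qed.

Section Iter.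
Variables g h : R -> R.
Hypothesis H : SP g h.

Lemma it_pos n x : 0 < x -> 0 < it g n x.
Proof. induction n; simpl; auto. intros; apply (sp_gpos _ _ H); auto. Qed.

Lemma g_lt x : 0 < x -> g x < x.
Proof. intros hx; pose proof (sp_sum _ _ H x hx); pose proof (sp_hpos _ _ H x hx); lra. Qed.

Lemma it_le n x : 0 < x -> it g n x <= x.
Proof.
  induction n; simpl; intros hx; [lra|].
  pose proof (g_lt (it g n x) (it_pos n x hx)); pose proof (IHn hx); lra.
Qed.

Lemma it_add a b x : it g (a + b) x = it g a (it g b x).
Proof. induction a; simpl; auto. rewrite IHa; auto. Qed.

Lemma it_S' n x : it g (S n) x = it g n (g x).
Proof. replace (S n) with (n + 1)%nat by lia. rewrite it_add. reflexivity. Qed.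

Lemma it_mono n x y : 0 < x -> x < y -> it g n x < it g n y.
Proof.
  induction n; simpl; auto. intros. apply (sp_ginc _ _ H); auto. apply it_pos; auto.
Qed.

Lemma it_mono_le n x y : 0 < x -> x <= y -> it g n x <= it g n y.
Proof. intros hx [hl|he]; [left; apply it_mono; auto| subst; lra]. Qed.

Lemma it_comm1 n x : 0 < x -> g (it h n x) = it h n (g x).
Proof.
  induction n; simpl; auto. intros hx.
  rewrite (sp_comm _ _ H). rewrite IHn; auto.
  clear IHn. induction n; simpl; auto. apply (sp_hpos _ _ H); auto.
Qed.

Lemma it_to0 y c : 0 < y -> 0 < c -> exists j, it g j y <= c.
Proof.
  intros hy hc. destruct (Rle_lt_dec y c) as [l|l]. exists O; simpl; auto.
  destruct (continuity_ab_maj (fun z => g z - z) c y) as [M [HM1 HM2]]; [lra| |].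
  { intros z hz. apply continuity_pt_minus; [apply (sp_gcont _ _ H); lra|].
    apply derivable_continuous_pt, derivable_pt_id. }
  assert (hd : g M - M < 0) by (pose proof (g_lt M ltac:(lra)); lra).
  set (d := M - g M).
  destruct (INR_archimed d y) as [n hn]; [unfold d; lra|].
  destruct (classic (exists j, it g j y <= c)) as [e|ne]; auto.
  exfalso.
  assert (forall j, it g j y <= y - INR j * d).
  { induction j. simpl; lra.
    rewrite S_INR. simpl.
    assert (c < it g j y) by (apply Rnot_le_lt; intro; apply ne; eauto).
    assert (hj : c <= it g j y <= y) by (split; [lra| apply it_le; auto]).
    pose proof (HM1 (it g j y) hj). unfold d in *; lra. }
  pose proof (H0 n). pose proof (it_pos n y hy). lra.
Qed.
End Iter.


Fixpoint sm (F : R -> R) (l : list R) : R :=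
  match l with nil => 0 | a :: l => F a + sm F l end.

Section F1.
Variables g h : R -> R.
Hypothesis H : SP g h.

Fixpoint frag (n : nat) (x : R) : list R :=
  match n with O => [x] | S n => flat_map (fun f => [g f; h f]) (frag n x) end.

Lemma sm_flat F l : sm F (flat_map (fun f => [g f; h f]) l) = sm (fun f => F (g f) + F (h f)) l.
Proof. induction l; simpl; auto. rewrite IHl; ring. Qed.

Lemma frag_pos n x : 0 < x -> Forall (fun f => 0 < f) (frag n x).
Proof.
  intros hx; induction n; simpl; auto.
  apply Forall_forall; intros y hy. apply in_flat_map in hy as [f [hf hy]].
  rewrite Forall_forall in IHn. specialize (IHn f hf).
  destruct hy as [<-|[<-|[]]]; [apply (sp_gpos _ _ H)|apply (sp_hpos _ _ H)]; auto.
Qed.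

Lemma sm_ext F G l : Forall (fun f => 0 < f) l -> (forall z, 0 < z -> F z = G z) -> sm F l = sm G l.
Proof. induction 1; simpl; auto. intros; f_equal; auto. Qed.

Lemma sm_le F G l : Forall (fun f => 0 < f) l -> (forall z, 0 < z -> F z <= G z) -> sm F l <= sm G l.
Proof. induction 1; simpl; [lra|]. intros hz; pose proof (hz x H0); pose proof (IHForall hz); lra. Qed.

Lemma sm_lin a b F G l : sm (fun f => a * F f + b * G f) l = a * sm F l + b * sm G l.
Proof. induction l; simpl; [ring|]. rewrite IHl; ring. Qed.

Lemma frag_split T n x : 0 < x -> (forall z, 0 < z -> T z = T (g z) + T (h z)) -> sm T (frag n x) = T x.
Proof.
  intros hx hT; induction n; simpl; [ring|].
  rewrite sm_flat. rewrite <- IHn. apply sm_ext; [apply frag_pos; auto|].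
  intros; symmetry; auto.
Qed.

Lemma g3 z : 0 < z -> g z = g (h z) + g (g z).
Proof.
  intros hz. rewrite (sp_comm _ _ H z hz).
  pose proof (sp_sum _ _ H (g z) (sp_gpos _ _ H z hz)). lra.
Qed.

Definition Q f := (g (g f) * h f - g (h f) * g f) ^ 2 / (f * g f * h f).

Lemma Q_nonneg f : 0 < f -> 0 <= Q f.
Proof.
  intros hf; unfold Q. pose proof (sp_gpos _ _ H f hf); pose proof (sp_hpos _ _ H f hf).
  apply Rmult_le_pos; [apply pow2_ge_0|]. left; apply Rinv_0_lt_compat.
  apply Rmult_lt_0_compat; [apply Rmult_lt_0_compat|]; auto.
Qed.

Lemma step_id f : 0 < f ->
  g (g f) ^ 2 / g f + g (h f) ^ 2 / h f = g f ^ 2 / f + Q f.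
Proof.
  intros hf. unfold Q.
  pose proof (sp_gpos _ _ H f hf) as hG; pose proof (sp_hpos _ _ H f hf) as hH.
  pose proof (sp_sum _ _ H f hf) as hs. pose proof (g3 f hf) as h3.
  set (G := g f) in *. set (Hh := h f) in *. set (u := g G) in *. set (v := g Hh) in *.
  replace f with (G + Hh) by lra. rewrite h3.
  field. repeat split; lra.
Qed.

Lemma pt_bound f lam eps : 0 < f -> 0 < eps ->
  2 * lam * g f - lam ^ 2 * f - eps * f - Q f / (4 * eps) <= g (g f).
Proof.
  intros hf he. unfold Q.
  pose proof (sp_gpos _ _ H f hf) as hG; pose proof (sp_hpos _ _ H f hf) as hH.
  pose proof (sp_sum _ _ H f hf) as hs. pose proof (g3 f hf) as h3.
  set (G := g f) in *. set (Hh := h f) in *. set (u := g G) in *. set (v := g Hh) in *.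
  set (t := u * Hh - v * G).
  assert (e1 : u = G ^ 2 / f + t / f).
  { unfold t. apply Rmult_eq_reg_r with f; [|lra]. field_simplify; [|lra].
    assert (hz : G * (v + u - G) = 0) by (rewrite <- h3; ring). rewrite <- hs. nra. }
  assert (e2 : 2 * lam * G - lam ^ 2 * f <= G ^ 2 / f).
  { apply Rmult_le_reg_r with f; auto. field_simplify; [|lra].
    pose proof (pow2_ge_0 (G - lam * f)). nra. }
  assert (e3 : - eps * f - t ^ 2 / (f * G * Hh) / (4 * eps) <= t / f).
  { assert (hp : 0 < f * G * Hh) by (repeat apply Rmult_lt_0_compat; auto).
    apply Rmult_le_reg_r with (4 * eps * f * G * Hh); [repeat apply Rmult_lt_0_compat; lra|].
    field_simplify; [|lra|lra].
    assert (GH : G * Hh <= f * f) by nra.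
    pose proof (pow2_ge_0 (t + 2 * eps * G * Hh)).
    assert (0 <= eps * G * Hh) by (repeat apply Rmult_le_pos; lra).
    assert (K : 0 <= (4 * eps ^ 2 * (G * Hh)) * (f * f - G * Hh)).
    { apply Rmult_le_pos; [|lra]. assert (0 <= G * Hh) by nra. nra. }
    nra. }
  lra.
Qed.

Lemma F1 x : 0 < x -> g x * g x <= x * g (g x).
Proof.
  intros hx.
  set (Phi n := sm (fun f => g f ^ 2 / f) (frag n x)).
  set (E n := sm Q (frag n x)).
  assert (hstep : forall n, Phi (S n) = Phi n + E n).
  { intros n. unfold Phi, E. change (frag (S n) x) with (flat_map (fun f => [g f; h f]) (frag n x)). rewrite sm_flat.
    transitivity (sm (fun f => 1 * (g f ^ 2 / f) + 1 * Q f) (frag n x)).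
    { apply sm_ext; [apply frag_pos; auto|]. intros z hz. cbv beta. pose proof (step_id z hz) as e; simpl in e |- *; lra. }
    rewrite sm_lin; ring. }
  assert (hup : forall n, Phi n <= x).
  { intros n. unfold Phi. apply Rle_trans with (sm (fun z => z) (frag n x)).
    2:{ right; apply frag_split; auto. intros z hz; symmetry; apply (sp_sum _ _ H); auto. }
    apply sm_le; [apply frag_pos; auto|]. intros z hz.
    pose proof (sp_gpos _ _ H z hz); pose proof (g_lt _ _ H z hz).
    apply Rmult_le_reg_r with z; auto. field_simplify; [|lra]. nra. }
  assert (h0 : 0 < Phi O).
  { unfold Phi; simpl. pose proof (sp_gpos _ _ H x hx).
    assert (0 < g x ^ 2 / x) by (apply Rdiv_lt_0_compat; auto; apply pow_lt; auto). lra. }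
  assert (hEpos : forall n, 0 <= E n).
  { intros n; unfold E. clear -H hx. induction (frag_pos n x hx); simpl; [lra|]. pose proof (Q_nonneg x0 H0); lra. }
  assert (hpig : forall N : nat, (1 <= N)%nat -> exists n, E n <= x / INR N).
  { intros N hN. apply NNPP; intro hn.
    assert (hall : forall n, x / INR N < E n).
    { intros n; apply Rnot_le_lt; intro; apply hn; eauto. }
    assert (forall k, Phi O + INR k * (x / INR N) <= Phi k).
    { induction k. { simpl; lra. } rewrite hstep, S_INR. pose proof (hall k); lra. }
    pose proof (H0 N). pose proof (hup N).
    assert (INR N * (x / INR N) = x) by (field; apply not_0_INR; lia). lra. }
  assert (hlow : forall n eps, 0 < eps -> g x ^ 2 / x - eps * x - E n / (4 * eps) <= g (g x)).
  { intros n eps he.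
    set (lam := g x / x).
    rewrite <- (frag_split (fun z => g (g z)) n x hx).
    2:{ intros z hz. rewrite (g3 (g z)) at 1; [|apply (sp_gpos _ _ H); auto].
        rewrite (sp_comm _ _ H z hz). ring. }
    assert (A1 : sm g (frag n x) = g x) by (apply frag_split; auto; intros; rewrite (g3 z) at 1; auto; ring).
    assert (A2 : sm (fun z => z) (frag n x) = x) by (apply frag_split; auto; intros; symmetry; apply (sp_sum _ _ H); auto).
    assert (A3 : sm (fun f => 2 * lam * g f - lam ^ 2 * f - eps * f - Q f / (4 * eps)) (frag n x)
                 = 2 * lam * g x - lam ^ 2 * x - eps * x - E n / (4 * eps)).
    { unfold E.
      transitivity (sm (fun f => 1 * ((2 * lam) * g f + (- lam ^ 2 - eps) * f) + (- / (4 * eps)) * Q f) (frag n x)).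
      { apply sm_ext; [apply frag_pos; auto|]. intros; field; lra. }
      rewrite sm_lin, sm_lin, A1, A2. field. lra. }
    assert (A4 : 2 * lam * g x - lam ^ 2 * x = g x ^ 2 / x) by (unfold lam; field; lra).
    pose proof (sm_le _ _ (frag n x) (frag_pos n x hx) (fun f hf => pt_bound f lam eps hf he)).
    lra. }
  apply Rnot_lt_le; intro hc.
  set (d := g x ^ 2 / x - g (g x)).
  assert (hd : 0 < d).
  { unfold d. apply Rmult_lt_reg_r with x; auto. field_simplify; [|lra]. nra. }
  set (eps := d / (4 * x)).
  assert (he : 0 < eps) by (unfold eps; apply Rdiv_lt_0_compat; lra).
  destruct (INR_archimed (2 * eps * d) x) as [N hN]; [nra|].
  destruct N as [|N']. { simpl in hN; lra. }
  destruct (hpig (S N') ltac:(lia)) as [n hn].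
  pose proof (hlow n eps he).
  assert (hE : E n / (4 * eps) <= d / 2).
  { assert (0 < INR (S N')) by (apply lt_0_INR; lia).
    apply Rmult_le_reg_r with (4 * eps); [lra|].
    field_simplify; [|lra].
    assert (x / INR (S N') <= 2 * eps * d).
    { apply Rmult_le_reg_r with (INR (S N')); auto. field_simplify; lra. }
    lra. }
  assert (eps * x = d / 4) by (unfold eps; field; lra).
  unfold d in *. lra.
Qed.
End F1.


Fixpoint prodl (m : nat) (F : nat -> R) : R :=
  match m with O => 1 | S m => prodl m F * F m end.

Lemma CV_const c : Un_cv (fun _ => c) c.
Proof. intros e he; exists O; intros; unfold Rdist; rewrite Rminus_diag, Rabs_R0; lra. Qed.

Lemma CV_ext u v l : (forall n, u n = v n) -> Un_cv u l -> Un_cv v l.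
Proof. intros e hu eps he; destruct (hu eps he) as [N hN]; exists N; intros; rewrite <- e; auto. Qed.

Lemma CV_pow u l j : Un_cv u l -> Un_cv (fun k => u k ^ j) (l ^ j).
Proof.
  intros hu; induction j; simpl. apply CV_const. apply CV_mult; auto.
Qed.

Lemma CV_prodl (u : nat -> nat -> R) L m :
  (forall l, Un_cv (u l) L) -> Un_cv (fun k => prodl m (fun l => 1 - u l k)) ((1 - L) ^ m).
Proof.
  intros hu; induction m; simpl. apply CV_const.
  rewrite Rmult_comm. apply CV_mult; auto. apply CV_minus; auto. apply CV_const.
Qed.

Lemma bern d m : 0 <= d -> 1 + INR m * d <= (1 + d) ^ m.
Proof.
  intros hd; induction m. simpl; lra. rewrite S_INR; simpl.
  assert (0 <= INR m * d) by (apply Rmult_le_pos; auto; apply pos_INR). nra.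
Qed.

Section Key.
Variables g h : R -> R.
Hypothesis H : SP g h.

Definition rs z k := g (it g k z) / it g k z.

Lemma it_comm2 n x : 0 < x -> h (it g n x) = it g n (h x).
Proof.
  induction n; simpl; auto. intros hx.
  rewrite <- (sp_comm _ _ H); [|apply (it_pos g h H); auto]. rewrite IHn; auto.
Qed.

Lemma it_hpos n x : 0 < x -> 0 < it h n x.
Proof. induction n; simpl; auto. intros; apply (sp_hpos _ _ H); auto. Qed.

Lemma it_comm k l y : 0 < y -> it g k (it h l y) = it h l (it g k y).
Proof.
  intros hy; induction l; simpl; auto.
  rewrite <- IHl. rewrite it_comm2; auto. apply it_hpos; auto.
Qed.

Lemma it_gcomm a b y : it g a (it g b y) = it g b (it g a y).
Proof. rewrite <- !it_add. f_equal; lia. Qed.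

Lemma rs_grow z : 0 < z -> Un_growing (rs z).
Proof.
  intros hz k. unfold rs. simpl. set (w := it g k z).
  assert (hw : 0 < w) by (apply (it_pos g h H); auto).
  pose proof (F1 g h H w hw). pose proof (sp_gpos _ _ H w hw).
  apply Rmult_le_reg_r with (w * g w); [apply Rmult_lt_0_compat; auto|].
  field_simplify; lra.
Qed.

Lemma rs_lt1 z k : 0 < z -> rs z k < 1.
Proof.
  intros hz; unfold rs. pose proof (it_pos g h H k z hz). pose proof (g_lt g h H _ H0).
  apply Rmult_lt_reg_r with (it g k z); auto. field_simplify; lra.
Qed.

Lemma rs_pos z k : 0 < z -> 0 < rs z k.
Proof.
  intros hz; unfold rs. pose proof (it_pos g h H k z hz). apply Rdiv_lt_0_compat; auto.
  apply (sp_gpos _ _ H); auto.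
Qed.

Lemma rs_cv z : 0 < z -> exists L, Un_cv (rs z) L.
Proof.
  intros hz. destruct (growing_cv (rs z)) as [L hL]. apply rs_grow; auto.
  exists 1. intros x [i ->]. left; apply rs_lt1; auto. eauto.
Qed.

Lemma rs_mono z a b : 0 < z -> (a <= b)%nat -> rs z a <= rs z b.
Proof.
  intros hz hab; induction hab; [lra|]. pose proof (rs_grow z hz m); lra.
Qed.

Lemma it_lower j w : 0 < w -> (g w / w) ^ j * w <= it g j w.
Proof.
  intros hw; induction j; simpl; [lra|].
  pose proof (rs_mono w 0 j hw ltac:(lia)) as hm. unfold rs in hm; simpl in hm.
  pose proof (it_pos g h H j w hw) as hp.
  assert (e : g (it g j w) = rs w j * it g j w) by (unfold rs; field; lra).
  rewrite e. unfold rs. pose proof (rs_pos w 0 hw). unfold rs in H0; simpl in H0.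
  assert (0 <= (g w / w) ^ j * w) by (apply Rmult_le_pos; [apply pow_le|]; lra).
  apply Rle_trans with (g w / w * (it g j w)). nra.
  apply Rmult_le_compat_r; lra.
Qed.

Lemma L_lt1 z L : 0 < z -> Un_cv (rs z) L -> L < 1.
Proof.
  intros hz hL. destruct (it_to0 g h H z (h z) hz (sp_hpos _ _ H z hz)) as [j hj].
  set (p := g z / z).
  assert (hp : 0 < p) by (apply Rdiv_lt_0_compat; auto; apply (sp_gpos _ _ H); auto).
  assert (hb : forall k, rs z k <= 1 - p ^ j).
  { intros k. set (w := it g k z).
    assert (hw : 0 < w) by (apply (it_pos g h H); auto).
    assert (e1 : 1 - rs z k = h w / w).
    { unfold rs. fold w. pose proof (sp_sum _ _ H w hw). replace (h w) with (w - g w) by lra. field; lra. }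
    assert (hhw : it g j w <= h w).
    { unfold w. rewrite it_comm2; auto. rewrite it_gcomm. apply it_mono_le with (h := h); auto.
      apply (it_pos g h H); auto. }
    pose proof (it_lower j w hw).
    assert (p ^ j <= (g w / w) ^ j).
    { apply pow_incr. split; [lra|]. pose proof (rs_mono z 0 k hz ltac:(lia)). unfold rs in H1; simpl in H1. fold w in H1. unfold p; lra. }
    assert (p ^ j * w <= h w) by nra.
    assert (p ^ j <= h w / w) by (apply Rmult_le_reg_r with w; auto; field_simplify; lra).
    lra. }
  pose proof (Rle_cv_lim hb hL (CV_const _)).
  pose proof (pow_lt p j hp). lra.
Qed.

Lemma L_h z L L' : 0 < z -> Un_cv (rs z) L -> Un_cv (rs (h z)) L' -> L' = L.
Proof.
  intros hz hL hL'.
  assert (hid : forall k, rs z k = (1 - rs z k) * rs (h z) k + rs z k * rs z (k + 1)).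
  { intros k. set (w := it g k z). assert (hw : 0 < w) by (apply (it_pos g h H); auto).
    unfold rs. replace (k + 1)%nat with (S k) by lia. simpl. fold w.
    rewrite <- it_comm2; auto. fold w.
    pose proof (sp_sum _ _ H w hw). pose proof (g3 g h H w hw).
    pose proof (sp_gpos _ _ H w hw). pose proof (sp_hpos _ _ H w hw).
    assert (e : 1 - g w / w = h w / w) by (replace (h w) with (w - g w) by lra; field; lra).
    rewrite e. rewrite H1 at 1. field. repeat split; lra. }
  assert (hc : Un_cv (fun k => (1 - rs z k) * rs (h z) k + rs z k * rs z (k + 1)) ((1 - L) * L' + L * L)).
  { apply CV_plus; apply CV_mult; auto. apply CV_minus; auto; apply CV_const. apply CV_shift'; auto. }
  assert (hc2 : Un_cv (rs z) ((1 - L) * L' + L * L)) by (apply CV_ext with (2 := hc); intros; symmetry; auto).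
  pose proof (UL_sequence _ _ _ hL hc2). pose proof (L_lt1 z L hz hL).
  assert ((1 - L) * (L - L') = 0) by nra.
  apply Rmult_integral in H2 as [|]; lra.
Qed.

Lemma L_hl y L l : 0 < y -> Un_cv (rs y) L -> Un_cv (rs (it h l y)) L.
Proof.
  intros hy hL; induction l; simpl; auto.
  assert (hp : 0 < it h l y) by (apply it_hpos; auto).
  destruct (rs_cv (h (it h l y))) as [L' hL']. apply (sp_hpos _ _ H); auto.
  rewrite <- (L_h _ _ _ hp IHl hL'). auto.
Qed.

Lemma it_h_prod m w : 0 < w -> it h m w = w * prodl m (fun l => 1 - g (it h l w) / it h l w).
Proof.
  intros hw; induction m; simpl; [ring|].
  rewrite <- Rmult_assoc, <- IHm. pose proof (it_hpos m w hw).
  pose proof (sp_sum _ _ H _ H0). field_simplify; lra.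
Qed.

Lemma key y : 0 < y -> exists L, 0 < L < 1 /\ (forall k, rs y k <= L) /\
  (forall j m, it g j y <= it h m y -> L ^ j <= (1 - L) ^ m).
Proof.
  intros hy. destruct (rs_cv y hy) as [L hL]. exists L.
  pose proof (growing_ineq _ _ (rs_grow y hy) hL) as hle.
  split; [split|split]; auto.
  - pose proof (rs_pos y 0 hy); pose proof (hle O); lra.
  - apply (L_lt1 y); auto.
  - intros j m hjm.
    assert (hb : forall k, rs y k ^ j <= prodl m (fun l => 1 - rs (it h l y) k)).
    { intros k. set (w := it g k y). assert (hw : 0 < w) by (apply (it_pos g h H); auto).
      assert (h1 : it g j w <= it h m w).
      { unfold w. rewrite it_gcomm, <- it_comm; auto. apply it_mono_le with (h := h); auto. apply (it_pos g h H); auto. }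
      pose proof (it_lower j w hw) as h2.
      rewrite it_h_prod in h1; auto.
      assert (e : prodl m (fun l => 1 - g (it h l w) / it h l w) = prodl m (fun l => 1 - rs (it h l y) k)).
      { clear -H hy. induction m; simpl; auto. rewrite IHm. f_equal. unfold rs, w. rewrite it_comm; auto. }
      rewrite e in h1. unfold rs at 1. fold w.
      apply Rmult_le_reg_r with w; auto. lra. }
    apply (Rle_cv_lim hb). apply CV_pow; auto.
    apply CV_prodl with (u := fun l => rs (it h l y)). intros l; apply L_hl; auto.
Qed.
End Key.


Lemma first_cross (g h : R -> R) (HS : SP g h) (HS' : SP h g) y m : 0 < y -> (1 <= m)%nat ->
  exists j, it g (S j) y <= it h m y /\ it h m y <= it g j y.
Proof.
  intros hy hm.
  assert (hpos : 0 < it h m y) by (apply (it_pos h g HS'); auto).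
  assert (hlt : it h m y < y).
  { destruct m as [|m']; [lia|]. simpl. pose proof (g_lt h g HS' (it h m' y) (it_pos h g HS' m' y hy)).
    pose proof (it_le h g HS' m' y hy). lra. }
  destruct (it_to0 g h HS y (it h m y) hy hpos) as [j0 hj0].
  induction j0. { simpl in hj0; lra. }
  destruct (Rle_dec (it g j0 y) (it h m y)) as [l|l]; auto.
  exists j0; split; auto; lra.
Qed.

Lemma orbit_inv (g h : R -> R) (HS : SP g h) (HS' : SP h g) y : 0 < y ->
  g (g y) / g y = g y / y.
Proof.
  intros hy.
  destruct (key g h HS y hy) as [L [[L0 L1] [hle hA]]].
  destruct (key h g HS' y hy) as [L' [[L0' L1'] [hle' hB]]].
  pose proof (hle O) as r0; pose proof (hle 1%nat) as r1; pose proof (hle' O) as r0'.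
  unfold rs in r0, r1, r0'; simpl in r0, r1, r0'.
  pose proof (sp_sum _ _ HS y hy) as hs.
  assert (e : h y / y = 1 - g y / y) by (replace (h y) with (y - g y) by lra; field; lra).
  pose proof (F1 g h HS y hy) as hf1.
  pose proof (sp_gpos _ _ HS y hy) as gp.
  assert (hf1' : g y / y <= g (g y) / g y).
  { apply Rmult_le_reg_r with (y * g y); [apply Rmult_lt_0_compat; auto|]. field_simplify; lra. }
  assert (hsum : L + L' <= 1).
  { apply Rnot_lt_le; intro hc.
    set (d := L' / (1 - L) - 1).
    assert (hd : 0 < d).
    { unfold d. apply Rlt_0_minus. apply Rmult_lt_reg_r with (1 - L); [lra|]. field_simplify; lra. }
    destruct (INR_archimed d (/ L)) as [m hm]; auto.
    destruct m as [|m']. { simpl in hm. pose proof (Rinv_0_lt_compat L L0). lra. }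
    destruct (first_cross g h HS HS' y (S m') hy ltac:(lia)) as [j [hj1 hj2]].
    pose proof (hA (S j) (S m') hj1) as a1.
    pose proof (hB (S m') j hj2) as a2.
    assert (a3 : (1 - L') ^ j <= L ^ j) by (apply pow_incr; lra).
    assert (a4 : L' = (1 - L) * (1 + d)) by (unfold d; field; lra).
    assert (a2' : L' ^ S m' = (1 - L) ^ S m' * (1 + d) ^ S m') by (rewrite a4, Rpow_mult_distr; reflexivity).
    pose proof (bern d (S m') (Rlt_le _ _ hd)) as a5.
    assert (a6 : 0 < (1 - L) ^ S m') by (apply pow_lt; lra).
    assert (a1' : L * L ^ j <= (1 - L) ^ S m') by exact a1.
    assert (b : (1 - L) ^ S m' * (1 + d) ^ S m' * L <= L ^ j * L) by (apply Rmult_le_compat_r; lra).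
    assert (a7 : (1 - L) ^ S m' * (1 + d) ^ S m' * L <= (1 - L) ^ S m') by lra.
    assert (a8 : (1 + d) ^ S m' * L <= 1).
    { apply Rmult_le_reg_l with ((1 - L) ^ S m'); auto. lra. }
    assert (a9 : 1 < (1 + INR (S m') * d) * L).
    { assert (hL : /L < 1 + INR (S m') * d) by lra.
      apply Rmult_lt_compat_r with (r := L) in hL; auto.
      rewrite Rinv_l in hL; lra. }
    nra. }
  lra.
Qed.

Lemma ratio_mono (g h : R -> R) (HS : SP g h) (HS' : SP h g) x y : 0 < x -> x < y ->
  g x / x <= g y / y.
Proof.
  intros hx hxy.
  assert (hinv : forall w, 0 < w -> forall k, it g k w = (g w / w) ^ k * w).
  { intros w hw.
    assert (hr : forall k, g (it g k w) / it g k w = g w / w).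
    { induction k; simpl; auto. rewrite orbit_inv with (h := h); auto. apply (it_pos g h HS); auto. }
    induction k; simpl; [ring|].
    pose proof (it_pos g h HS k w hw) as hz.
    assert (e : g (it g k w) = (g (it g k w) / it g k w) * it g k w) by (field; lra).
    rewrite e, hr, IHk. ring. }
  set (p := g x / x). set (q := g y / y).
  assert (hp : 0 < p) by (apply Rdiv_lt_0_compat; auto; apply (sp_gpos _ _ HS); auto).
  assert (hq : 0 < q) by (apply Rdiv_lt_0_compat; [apply (sp_gpos _ _ HS)|]; lra).
  apply Rnot_lt_le; intro hc. fold p q in hc.
  set (d := p / q - 1).
  assert (hd : 0 < d) by (unfold d; apply Rlt_0_minus; apply Rmult_lt_reg_r with q; auto; field_simplify; lra).
  destruct (INR_archimed d (y / x)) as [k hk]; auto.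
  pose proof (it_mono g h HS k x y hx hxy) as hm.
  rewrite (hinv x hx), (hinv y ltac:(lra)) in hm. fold p q in hm.
  assert (ep : p = q * (1 + d)) by (unfold d; field; lra).
  rewrite ep, Rpow_mult_distr in hm.
  pose proof (bern d k (Rlt_le _ _ hd)).
  assert (0 < q ^ k) by (apply pow_lt; auto).
  assert (y < (1 + INR k * d) * x).
  { assert (y / x < INR k * d) by lra. apply Rmult_lt_compat_r with (r := x) in H1; auto.
    replace (y / x * x) with y in H1 by (field; lra). lra. }
  assert (c1 : (1 + d) ^ k * x < y).
  { apply Rmult_lt_reg_l with (q ^ k); auto. rewrite <- Rmult_assoc; lra. }
  assert (c2 : (1 + INR k * d) * x <= (1 + d) ^ k * x) by (apply Rmult_le_compat_r; lra).
  lra.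
Qed.

Lemma linear (g h : R -> R) (HS : SP g h) (HS' : SP h g) x : 0 < x -> g x = g 1 * x.
Proof.
  assert (hr : forall x y, 0 < x -> x < y -> g x / x = g y / y).
  { intros x0 y hx hxy. pose proof (ratio_mono g h HS HS' x0 y hx hxy).
    pose proof (ratio_mono h g HS' HS x0 y hx hxy).
    pose proof (sp_sum _ _ HS x0 hx). pose proof (sp_sum _ _ HS y ltac:(lra)).
    assert (h x0 / x0 = 1 - g x0 / x0) by (replace (h x0) with (x0 - g x0) by lra; field; lra).
    assert (h y / y = 1 - g y / y) by (replace (h y) with (y - g y) by lra; field; lra).
    lra. }
  intros hx. destruct (Rtotal_order x 1) as [l|[e|l]].
  - pose proof (hr x 1 hx l). replace (g 1) with (g 1 / 1) by field. rewrite <- H. field; lra.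
  - subst; ring.
  - pose proof (hr 1 x Rlt_0_1 l). replace (g 1) with (g 1 / 1) by field. rewrite H. field; lra.
Qed.


Lemma it_to0' (g : R -> R) (gp : forall x, 0 < x -> 0 < g x) (gl : forall x, 0 < x -> g x < x)
  (gc : forall x, 0 < x -> continuity_pt g x) y c : 0 < y -> 0 < c -> exists j, it g j y <= c.
Proof.
  intros hy hc.
  assert (ip : forall n, 0 < it g n y) by (induction n; simpl; auto).
  assert (il : forall n, it g n y <= y).
  { induction n; simpl; [lra|]. pose proof (gl _ (ip n)); lra. }
  destruct (Rle_lt_dec y c) as [l|l]. exists O; simpl; auto.
  destruct (continuity_ab_maj (fun z => g z - z) c y) as [M [HM1 HM2]]; [lra| |].
  { intros z hz. apply continuity_pt_minus; [apply gc; lra|].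
    apply derivable_continuous_pt, derivable_pt_id. }
  assert (hd : g M - M < 0) by (pose proof (gl M ltac:(lra)); lra).
  set (d := M - g M).
  destruct (INR_archimed d y) as [n hn]; [unfold d; lra|].
  destruct (classic (exists j, it g j y <= c)) as [e|ne]; auto.
  exfalso.
  assert (forall j, it g j y <= y - INR j * d).
  { induction j. simpl; lra.
    rewrite S_INR. simpl.
    assert (c < it g j y) by (apply Rnot_le_lt; intro; apply ne; eauto).
    assert (hj : c <= it g j y <= y) by (split; [lra| apply il]).
    pose proof (HM1 (it g j y) hj). unfold d in *; lra. }
  pose proof (H n). pose proof (ip n). lra.
Qed.

Lemma hinc (g : R -> R) (gp : forall x, 0 < x -> 0 < g x) (gl : forall x, 0 < x -> g x < x)
  (gc : forall x, 0 < x -> continuity_pt g x) (gi : forall x y, 0 < x -> x < y -> g x < g y)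
  (g3 : forall z, 0 < z -> g z = g (z - g z) + g (g z)) :
  forall x y, 0 < x -> x < y -> x - g x < y - g y.
Proof.
  intros x y hx hxy. apply Rnot_le_lt; intro hc.
  assert (inv : forall n, 0 < it g n x /\ it g n x < it g n y /\ y - x <= it g n y - it g n x /\
                 it g n y - g (it g n y) <= it g n x - g (it g n x)).
  { induction n; simpl; [repeat split; lra|].
    destruct IHn as [a [b [c d]]]. set (X := it g n x) in *. set (Y := it g n y) in *.
    assert (hX : 0 < X - g X) by (pose proof (gl X a); lra).
    assert (hY : 0 < Y) by lra.
    assert (e1 : g Y - g X >= Y - X) by lra.
    assert (g (Y - g Y) <= g (X - g X)).
    { destruct (Rle_lt_or_eq_dec _ _ d) as [l|l]; [left; apply gi; auto; pose proof (gl Y hY); lra|rewrite l; lra]. }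
    pose proof (g3 Y hY). pose proof (g3 X a).
    repeat split; try apply gp; auto; lra. }
  destruct (it_to0' g gp gl gc y (y - x) ltac:(lra) ltac:(lra)) as [n hn].
  destruct (inv n) as [a [b [c d]]]. lra.
Qed.

Theorem mainTheorem7 (g : R -> R)
  (g_pos : forall x, 0 < x -> 0 < g x)
  (g_cont : forall x, 0 < x -> continuity_pt g x)
  (g_incr : forall x y, 0 < x -> x < y -> g x < g y)
  (g_lt : forall x, 0 < x -> g x < x) :
  ((exists alpha : R -> R, common_Abel_function g (fun x => x - g x) alpha) <->
   (forall x, 0 < x -> g (x - g x) = g x - g (g x))) /\
  ((forall x, 0 < x -> g (x - g x) = g x - g (g x)) <->
   (forall x, 0 < x -> g x = g (x - g x) + g (g x))).
Proof.
  split; [split|split].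
  - intros [alpha [[[hc [beta [bp [ab [ba bc]]]]] [c Hc]] [_ [d Hd]]]] x hx.
    assert (h1 : 0 < x - g x) by (pose proof (g_lt x hx); lra).
    assert (h2 : 0 < g x) by auto.
    assert (h3 : 0 < g x - g (g x)) by (pose proof (g_lt _ h2); lra).
    assert (h4 : 0 < g (x - g x)) by auto.
    assert (e : alpha (g (x - g x)) = alpha (g x - g (g x))).
    { rewrite Hc; auto. pose proof (Hd x hx) as e1. pose proof (Hd (g x) h2) as e2.
      simpl in e1, e2. rewrite e1, e2, Hc; auto. ring. }
    rewrite <- (ba _ h4), <- (ba _ h3), e; reflexivity.
  - intros hii.
    set (h := fun x => x - g x).
    assert (g3 : forall z, 0 < z -> g z = g (z - g z) + g (g z)) by (intros z hz; rewrite hii; auto; ring).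
    assert (hcont : forall x, 0 < x -> continuity_pt h x).
    { intros x hx. unfold h; cbv beta. apply continuity_pt_minus with (f1 := id) (f2 := g); auto.
      apply derivable_continuous_pt, derivable_pt_id. }
    assert (HS : SP g h).
    { apply Build_SP.
      - exact g_pos.
      - intros x hx; unfold h; cbv beta; pose proof (g_lt x hx); lra.
      - intros x hx; unfold h; cbv beta; ring.
      - intros x hx; unfold h; cbv beta. apply hii; auto.
      - exact g_incr.
      - intros x y hx hxy; unfold h; cbv beta; apply hinc; auto.
      - exact g_cont. }
    assert (HS' : SP h g) by (apply SP_sym; auto).
    set (a := g 1).
    assert (ha : forall x, 0 < x -> g x = a * x) by (intros; apply (linear g h HS HS'); auto).
    assert (a0 : 0 < a) by (unfold a; apply g_pos; lra).
    assert (a1 : a < 1) by (unfold a; pose proof (g_lt 1 Rlt_0_1); lra).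
    exists ln. split; split.
    + split.
      * intros x hx. apply derivable_continuous_pt. exists (/ x). apply derivable_pt_lim_ln; auto.
      * exists exp. split; [apply exp_pos|]. split; [apply ln_exp|]. split; [apply exp_ln|].
        intros y; apply derivable_continuous_pt, derivable_pt_exp.
    + exists (ln a). intros x hx. rewrite ha, ln_mult; auto; ring.
    + split.
      * intros x hx. apply derivable_continuous_pt. exists (/ x). apply derivable_pt_lim_ln; auto.
      * exists exp. split; [apply exp_pos|]. split; [apply ln_exp|]. split; [apply exp_ln|].
        intros y; apply derivable_continuous_pt, derivable_pt_exp.
    + exists (ln (1 - a)). intros x hx. cbv beta. unfold h. rewrite ha; auto.
      replace (x - a * x) with ((1 - a) * x) by ring. rewrite ln_mult; auto; lra.
  - intros hii x hx. rewrite hii; auto; ring.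
  - intros hiii x hx. rewrite (hiii x hx) at 2. ring.
Qed.
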